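(* Let $n$ be a positive integer and let $G$ be a pure $(2n)$-sparse gapset of genus $g=3n+1$ with depth $q$. Then $q\le 4$.
   Context: A gapset is a finite set $G\subset\mathbb{N}=\{1,2,\dots\}$ such that whenever $z\in G$ and $z=x+y$ with $x,y\in\mathbb{N}$, then $x\in G$ or $y\in G$; its genus is $g=\#G$. Writing $G=\{\ell_1<\dots<\ell_g\}$: multiplicity $m(G)=\min\{s\in\mathbb{N}:s\notin G\}$; conductor $c(G)=\min\{s\in\mathbb{N}: s+t\notin G\ \forall t\in\mathbb{N}_0\}$; depth $q(G)=\lceil c(G)/m(G)\rceil$. $G$ is pure $\kappa$-sparse if $\ell_{i+1}-\ell_i\le\kappa$ for all $i$ with equality for some $i$. *)

(* Defs.v *)
From mathcomp Require Import all_boot.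
Set Implicit Arguments. Unset Strict Implicit. Unset Printing Implicit Defensive.

(* A finite set G ⊂ {1,2,...} is represented by the strictly increasing list
   of its elements  l_1 < ... < l_g. *)
Definition is_gapset (G : seq nat) : Prop :=
  [/\ sorted ltn G, all (fun x => 0 < x) G &
      forall z x y, z \in G -> 0 < x -> 0 < y -> z = x + y ->
        (x \in G) \/ (y \in G)].

Definition genus (G : seq nat) : nat := size G.

Definition is_multiplicity (G : seq nat) (m : nat) : Prop :=
  [/\ 0 < m, m \notin G & forall s, 0 < s -> s < m -> s \in G].

Definition conductor_prop (G : seq nat) (s : nat) : Prop :=
  forall t, s + t \notin G.
Definition is_conductor (G : seq nat) (c : nat) : Prop :=
  [/\ 0 < c, conductor_prop G c &
      forall s, 0 < s -> s < c -> ~ conductor_prop G s].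

Definition ceil_div (c m : nat) : nat := (c + m.-1) %/ m.

Definition pure_sparse (kappa : nat) (G : seq nat) : Prop :=
  (forall i, i.+1 < size G -> nth 0 G i.+1 - nth 0 G i <= kappa) /\
  (exists i, i.+1 < size G /\ nth 0 G i.+1 - nth 0 G i = kappa).

(* Main.v *)
Require Import Defs.
From mathcomp Require Import all_boot.
From mathcomp Require Import zify.

Lemma nth_mono (s : seq nat) i j : sorted ltn s -> i < j -> j < size s ->
  nth 0 s i < nth 0 s j.
Proof.
move=> Hs Hij Hj.
have Hi : i < size s by apply: ltn_trans Hj.
by apply: (sorted_ltn_nth ltn_trans 0 Hs); rewrite ?inE.
Qed.

Lemma cond_bound G c : 0 < size G -> is_gapset G -> is_conductor G c ->
  c <= 2 * size G.
Proof.
move=> Hsz [Hs Hpos Hgap] [c0 Hc Hmin].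
case: (ltnP 1 c) => [c2|c1]; last by lia.
have cG : c.-1 \in G.
  apply/negPn/negP => H; apply: (Hmin c.-1); try lia.
  case=> [|t]; first by rewrite addn0.
  have -> : c.-1 + t.+1 = c + t by lia.
  exact: Hc.
pose k := c.-1 %/ 2.
pose f s := if s \in G then s else c.-1 - s.
have fG : forall s, 0 < s <= k -> f s \in G.
  move=> s Hsk; rewrite /f; case: ifP => // HsG.
  have [H|H] := Hgap c.-1 s (c.-1 - s) cG ltac:(lia) ltac:(lia) ltac:(lia).
    by rewrite H in HsG.
  exact: H.
have flt : forall s, 0 < s <= k -> f s < c.-1.
  by move=> s Hsk; rewrite /f; case: ifP => _; lia.
have finj : {in iota 1 k &, injective f}.
  move=> s s'; rewrite !mem_iota => Hs1 Hs2; rewrite /f.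
  by case: ifP => _; case: ifP => _; lia.
pose L := c.-1 :: map f (iota 1 k).
have uL : uniq L.
  rewrite /L /= (map_inj_in_uniq finj) iota_uniq andbT.
  apply/mapP => -[s Hs0 Hfs].
  move: Hs0; rewrite mem_iota => Hs0.
  have := flt s ltac:(lia); lia.
have sL : {subset L <= G}.
  move=> x; rewrite inE => /predU1P [->|/mapP [s Hs0 ->]] //.
  by apply: fG; move: Hs0; rewrite mem_iota; lia.
have := uniq_leq_size uL sL.
rewrite /L /= size_map size_iota; lia.
Qed.

Lemma mult_bound n G m : is_gapset G -> pure_sparse (2 * n) G ->
  is_multiplicity G m -> 2 * n <= m.
Proof.
move=> [Hs Hpos Hgap] [_ [i [Hi Hd]]] [m0 Hm _].
rewrite leqNgt; apply/negP => Hlt.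
set a := nth 0 G i in Hd; set b := nth 0 G i.+1 in Hd.
have Hab : a < b by apply: nth_mono.
have bG : b \in G by apply: mem_nth.
have aG : a \in G by apply: mem_nth; exact: ltnW.
have a0 : 0 < a by move/allP: Hpos => /(_ a aG).
have [H|H] := Hgap b m (b - m) bG m0 ltac:(lia) ltac:(lia).
  by rewrite H in Hm.
set j := index (b - m) G.
have Hj : j < size G by rewrite index_mem.
have Hx : nth 0 G j = b - m by rewrite nth_index.
case: (ltngtP j i) => Hji.
- have := @nth_mono G _ _ Hs Hji (ltnW Hi); rewrite Hx -/a; lia.
- have Hji' : i.+1 <= j by [].
  case: (ltngtP j i.+1) => Hj2; first lia.
  + have := @nth_mono G _ _ Hs Hj2 Hj; rewrite Hx -/b; lia.
  + move: Hx; rewrite Hj2 -/b; lia.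
- move: Hx; rewrite Hji -/a; lia.
Qed.

Theorem mainTheorem15 (n : nat) (G : seq nat) (m c : nat) :
  0 < n ->
  is_gapset G ->
  pure_sparse (2 * n) G ->
  genus G = 3 * n + 1 ->
  is_multiplicity G m ->
  is_conductor G c ->
  ceil_div c m <= 4.
Proof.
move=> n0 HG Hsp Hg Hm Hc.
have H1 := @mult_bound n G m HG Hsp Hm.
have H2 := @cond_bound G c ltac:(rewrite /genus in Hg; lia) HG Hc.
rewrite /genus in Hg.
case: Hm => m0 _ _.
rewrite /ceil_div -ltnS ltn_divLR //; lia.
Qed.
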